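(* For every $x\in(0,\pi)$ and $\theta>0$, $$\lim_{n\to\infty}\sqrt n\sum_{k\ge1}\frac{\sin^2(kx)}{k^2}\big(1-e^{-\theta k^2/n}\big)=\frac{\sqrt{\pi\theta}}{2}.$$ *)

(* Defs.v *)
From Stdlib Require Import Reals.
From Coquelicot Require Import Coquelicot.
Open Scope R_scope.

(* Term of index k >= 1 of the series, written with index j = k - 1 >= 0:
   sin^2(k x)/k^2 * (1 - exp(-theta k^2 / n)). *)
Definition termA4 (x theta : R) (n j : nat) : R :=
  let k := INR (S j) in
  (sin (k * x)) ^ 2 / k ^ 2 * (1 - exp (- theta * k ^ 2 / INR n)).

(* Main.v *)
Require Import Defs.
From Stdlib Require Import Reals Lra Lia.
From Coquelicot Require Import Coquelicot.
From HB Require Import structures.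
From mathcomp Require all_boot all_order all_algebra.
From mathcomp Require all_classical all_reals.
From mathcomp Require topology normedtype sequences derive realfun exp trigo measure lebesgue_measure lebesgue_integral ftc gauss_integral.
From mathcomp Require Rstruct Rstruct_topology.

Module MC.
Import all_boot all_order all_algebra.
Import all_classical all_reals.
Import topology normedtype sequences derive realfun exp trigo measure lebesgue_measure lebesgue_integral ftc gauss_integral.
Import Rstruct Rstruct_topology.
Import Order.TTheory GRing.Theory Num.Theory.
Import numFieldNormedType.Exports.
Local Open Scope classical_set_scope.
Local Open Scope ring_scope.


Lemma cosE' (x : Rdefinitions.R) : Rtrigo_def.cos x = trigo.cos x.
Proof.
rewrite /Rtrigo_def.cos; case: exist_cos => y.
rewrite /cos_in /infinite_sum => cos_ub.
have H : series (cos_coeff' x) @ \oo --> y.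
  rewrite -cvg_shiftS /=; apply/(@cvgrPdist_lt _ R^o) => e /RltP /cos_ub[N HN].
  near=> n.
  have nN : (n >= N)%coq_nat by apply/ssrnat.leP; near: n; exact: nbhs_infty_ge.
  move: HN => /(_ _ nN) /[!RdistE] /RltP /=.
  rewrite distrC sum_f_R0E; congr (`| _ - _ | < e).
  apply: eq_bigr=> k _; rewrite /cos_n /cos_coeff' RdivE RpowE INRE factE.
  rewrite RpowE /Rsqr -exprnP mulrAC; congr (_ * _ * _).
  by congr (_`!%:R^-1); rewrite -mul2n.
  by rewrite -mul2n exprM expr2.
have H2 := @cvg_cos_coeff' _ x.
exact: (cvg_unique _ H H2).
Unshelve. all: by end_near. Qed.

Lemma piE : (pi : Rdefinitions.R) = PI.
Proof.
have [/andP[h0 h2] hc] := @pihalf_02_cos_pihalf Rdefinitions.R.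
rewrite -cosE' in hc.
move/RleP: h0 => h0; move/RleP: h2 => h2.
have P2 := PI2_1.
have two : (2%:R : Rdefinitions.R) = IZR 2 by rewrite -INRE /=; lra.
change (Rle (IZR 0) (Rdiv pi 2)) in h0.
change (Rle (Rdiv pi 2) 2) in h2.
change (Rtrigo_def.cos (Rdiv pi 2) = IZR 0) in hc.
have h3 : Rle (Rdiv pi 2) (Rmult 2 PI) by lra.
have [E|E] := cos_eq_0_2PI_0 _ h0 h3 hc.
- have e1 : forall q : Rdefinitions.R, q = Rmult (Rdiv q 2) 2.
    by move=> q; field.
  rewrite (e1 pi) E; field.
- exfalso; move: h2; rewrite E => h2; lra.
Qed.

Definition Phi (y : Rdefinitions.R) : Rdefinitions.R :=
  gauss_integral_proof.integral0_gauss y.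

Lemma Phi_ge0 y : Rle 0 (Phi y).
Proof. apply/RleP; exact: gauss_integral_proof.integral0_gauss_ge0. Qed.

Lemma Phi_le y : Rle 0 y -> Rle (Phi y) y.
Proof.
move=> /RleP y0; apply/RleP.
rewrite /Phi /gauss_integral_proof.integral0_gauss.
apply: (@le_trans _ _ (\int[lebesgue_measure]_(t in `[0, y]) (cst (1:Rdefinitions.R) t))).
  apply: le_Rintegral => //.
  - apply: continuous_compact_integrable; first exact: segment_compact.
    by apply: continuous_subspaceT; exact: continuous_gauss_fun.
  - apply: continuous_compact_integrable; first exact: segment_compact.
    by apply: continuous_subspaceT => x; exact: cst_continuous.
  - by move=> x _; exact: gauss_fun_le1.
rewrite Rintegral_cst //.
have := @lebesgue_measure_itv Rdefinitions.R `[0, y].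
rewrite /= lte_fin => ->; rewrite mul1r.
by case: ifP => _ /=; rewrite ?oppr0 ?adde0 /= ?addr0.
Qed.

Lemma Phi_deriv y : Rlt 0 y ->
  derivable_pt_lim Phi y (Rtrigo_def.exp (Ropp (Rmult y y))).
Proof.
move=> /RltP y0.
have [d1 d2] : derivable (Phi : R^o -> R^o) y 1 /\ derive1 (Phi : R^o -> R^o) y = gauss_fun y.
  apply: (@continuous_FTC1 _ gauss_fun (BLeft 0) _ (y + 1) _ _ _ _).
  - by rewrite ltrDl.
  - apply: continuous_compact_integrable => //; first exact: segment_compact.
    by apply: continuous_subspaceT; exact: continuous_gauss_fun.
  - by rewrite /= lte_fin.
  - by move=> ?; exact: continuous_gauss_fun.
have C : (fun h : R^o => h^-1 *: (((Phi : R^o -> R^o) \o shift y) (h *: (1 : R^o)) - Phi y)) @ (0 : R^o)^' --> (gauss_fun y : R^o).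
  rewrite -d2 derive1E; exact: d1.
move=> eps /RltP eps0.
move/(@cvgrPdist_lt _ R^o): C => /(_ eps eps0).
rewrite /dnbhs /within => /nbhs_norm0P [/= e e0 He].
have e0R : Rlt 0 e by apply/RltP.
exists (mkposreal e e0R) => h /eqP h0 /RltP he.
have := He h he h0.
move=> H; apply/RltP; rewrite RabsE distrC.
rewrite /gauss_fun -RexpE expr2 in H.
move: H; rewrite /GRing.scale /= mulr1 RdivE.
have -> : (Phi (y + h) - Phi y) / h = h^-1 * (Phi (h + y) - Phi y).
  rewrite mulrC; congr (_ * (_ - _)); congr Phi; exact: addrC.
exact.
Qed.

Lemma Phi_lim eps : Rlt 0 eps -> exists M : Rdefinitions.R, forall y, Rle M y ->
  Rlt (Rabs (Rminus (Phi y) (Rdiv (R_sqrt.sqrt PI) 2))) eps.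
Proof.
move=> /RltP eps0.
have cvg_Ig : @gauss_integral_proof.integral0_gauss Rdefinitions.R x @[x --> +oo] --> Num.sqrt pi / 2.
  have : Num.sqrt (@gauss_integral_proof.integral0_gauss Rdefinitions.R x ^+ 2) @[x --> +oo]
      --> Num.sqrt (pi / 4).
    apply: continuous_cvg => //;
      [exact: sqrt_continuous|exact: gauss_integral_proof.cvg_integral0_gauss_sqr].
  rewrite sqrtrM ?pi_ge0// sqrtrV// (_ : 4 = 2 ^+ 2); last first.
    by rewrite expr2 -natrM.
  rewrite sqrtr_sqr ger0_norm//.
  rewrite (_ : (fun _ => Num.sqrt _) = gauss_integral_proof.integral0_gauss)//.
  apply/funext => r; rewrite sqrtr_sqr// ger0_norm//.
  exact: gauss_integral_proof.integral0_gauss_ge0.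
move/(@cvgrPdist_lt _ R^o): cvg_Ig => /(_ eps eps0) [M [_ HM]].
exists (M + 1) => y /RleP My.
have := HM y ltac:(by rewrite (lt_le_trans _ My) // ltrDl).
rewrite distrC RabsE RsqrtE piE.
move=> H; apply/RltP; exact: H.
Qed.

End MC.

Open Scope R_scope.

Definition ff (u : R) : R := (1 - exp (- u)) / u.

Lemma ff_bounds u : 0 < u -> 0 < ff u <= 1.
Proof.
  intros Hu. unfold ff.
  assert (H1 := exp_ineq1_le (- u)).
  assert (H2 : exp (- u) < 1).
  { rewrite <- exp_0. apply exp_increasing. lra. }
  split.
  - apply Rdiv_lt_0_compat; lra.
  - apply (Rmult_le_reg_r u); [lra|]. unfold Rdiv. rewrite Rmult_assoc, Rinv_l; lra.
Qed.

Lemma ff_dec u v : 0 < u -> u <= v -> ff v <= ff u.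
Proof.
  intros Hu Huv. destruct (Rle_lt_or_eq_dec _ _ Huv) as [Hlt|Heq]; [|subst; lra].
  destruct (MVT_cor2 ff (fun w => (exp (- w) * (1 + w) - 1) / (w * w)) u v Hlt)
    as [c [Hc1 Hc2]].
  - intros c Hc. apply is_derive_Reals. unfold ff. auto_derive.
    + lra.
    + field. lra.
  - assert (Hc : 0 < c) by lra.
    assert (H1 := exp_ineq1_le c).
    assert (H3 : exp (- c) * exp c = 1).
    { rewrite <- exp_plus. replace (- c + c) with 0 by ring. apply exp_0. }
    assert (H4 : exp (- c) * (1 + c) <= 1).
    { rewrite <- H3. apply Rmult_le_compat_l; [apply Rlt_le, exp_pos | lra]. }
    assert (H5 : (exp (- c) * (1 + c) - 1) / (c * c) <= 0).
    { unfold Rdiv. apply Rmult_le_0_r; [lra|]. left; apply Rinv_0_lt_compat; nra. }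
    assert (H6 : (exp (- c) * (1 + c) - 1) / (c * c) * (v - u) <= 0).
    { apply Rmult_le_0_r; lra. }
    lra.
Qed.

Definition gg (th t : R) : R := (1 - exp (- (th * (t * t)))) / (t * t).
Definition FF (th t : R) : R :=
  2 * sqrt th * MC.Phi (sqrt th * t) - (1 - exp (- (th * (t * t)))) / t.

Lemma gg_ff th t : 0 < th -> t <> 0 -> gg th t = th * ff (th * (t * t)).
Proof. intros. unfold gg, ff. field. split; [nra|lra]. Qed.

Lemma gg_bounds th t : 0 < th -> 0 < t -> 0 < gg th t <= th.
Proof.
  intros. rewrite gg_ff by lra. destruct (ff_bounds (th * (t * t))) as [A B]; [apply Rmult_lt_0_compat; nra|].
  split; [apply Rmult_lt_0_compat; lra|].
  apply Rle_trans with (th * 1); [apply Rmult_le_compat_l; lra | lra].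
Qed.

Lemma gg_dec th s t : 0 < th -> 0 < s -> s <= t -> gg th t <= gg th s.
Proof.
  intros. rewrite !gg_ff by lra. apply Rmult_le_compat_l; [lra|].
  apply ff_dec; [apply Rmult_lt_0_compat; nra|].
  apply Rmult_le_compat_l; [lra|]. apply Rmult_le_compat; lra.
Qed.

Lemma FF_deriv th t : 0 < th -> 0 < t -> derivable_pt_lim (FF th) t (gg th t).
Proof.
  intros Hth Ht. apply is_derive_Reals.
  assert (Hs := sqrt_lt_R0 th Hth).
  assert (Hss := sqrt_sqrt th (Rlt_le _ _ Hth)).
  assert (H1 : is_derive (fun t => MC.Phi (sqrt th * t)) t
                 (sqrt th * exp (- ((sqrt th * t) * (sqrt th * t))))).
  { apply (is_derive_comp MC.Phi (fun t => sqrt th * t)).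
    - apply is_derive_Reals, MC.Phi_deriv. nra.
    - auto_derive; [easy | ring]. }
  assert (H2 : is_derive (fun t => (1 - exp (- (th * (t * t))))/ t) t
     ((2 * th * t * exp (- (th * (t * t))) * t - (1 - exp (- (th * (t * t))))) / (t * t))).
  { auto_derive; [lra | field; lra]. }
  unfold FF.
  assert (H3 := is_derive_scal _ _ (2 * sqrt th) _ H1).
  assert (H4 := is_derive_minus _ _ _ _ _ H3 H2).
  replace (gg th t) with (minus (Rmult (2 * sqrt th) (sqrt th * exp (- ((sqrt th * t) * (sqrt th * t)))))
     ((2 * th * t * exp (- (th * (t * t))) * t - (1 - exp (- (th * (t * t))))) / (t * t))).
  - exact H4.
  - unfold minus, scal, plus, opp; simpl. unfold mult; simpl.
    replace (sqrt th * t * (sqrt th * t)) with (th * (t * t)).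
    + unfold gg. replace (2 * sqrt th * (sqrt th * exp (- (th * (t * t))))) with (2 * (sqrt th * sqrt th) * exp (- (th * (t * t)))) by ring. rewrite Hss. field. lra.
    + replace (sqrt th * t * (sqrt th * t)) with ((sqrt th * sqrt th) * (t * t)) by ring.
      rewrite Hss. ring.
Qed.

Lemma mvt_dec (F G : R -> R) a b : a < b ->
  (forall c, a <= c <= b -> derivable_pt_lim F c (G c)) ->
  (forall c, a <= c <= b -> G b <= G c <= G a) ->
  (b - a) * G b <= F b - F a <= (b - a) * G a.
Proof.
  intros Hab HD HG.
  destruct (MVT_cor2 F G a b Hab HD) as [c [Hc1 Hc2]].
  destruct (HG c ltac:(lra)) as [A B].
  rewrite Hc1. split; rewrite (Rmult_comm (G c)); apply Rmult_le_compat_l; lra.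
Qed.

Lemma FF_step th h m : 0 < th -> 0 < h -> 1 <= m ->
  h * gg th ((m + 1) * h) <= FF th ((m + 1) * h) - FF th (m * h) <= h * gg th (m * h).
Proof.
  intros Hth Hh Hm.
  assert (H := mvt_dec (FF th) (gg th) (m * h) ((m + 1) * h)).
  replace ((m + 1) * h - m * h) with h in H by ring.
  apply H.
  - nra.
  - intros c Hc. apply FF_deriv; nra.
  - intros c Hc. split; apply gg_dec; nra.
Qed.

Lemma FF_small th h : 0 < th -> 0 < h -> - (th * h) <= FF th h <= 2 * th * h.
Proof.
  intros Hth Hh. unfold FF.
  assert (Hs := sqrt_lt_R0 th Hth).
  assert (Hss := sqrt_sqrt th (Rlt_le _ _ Hth)).
  assert (P0 := MC.Phi_ge0 (sqrt th * h)).
  assert (P1 := MC.Phi_le (sqrt th * h) ltac:(nra)).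
  assert (Eq : (1 - exp (- (th * (h * h)))) / h = h * gg th h).
  { unfold gg. field. lra. }
  rewrite Eq. destruct (gg_bounds th h Hth Hh) as [G1 G2].
  assert (A1 : 0 <= 2 * sqrt th * MC.Phi (sqrt th * h)) by nra.
  assert (A2 : 2 * sqrt th * MC.Phi (sqrt th * h) <= 2 * sqrt th * (sqrt th * h)) by nra.
  replace (2 * sqrt th * (sqrt th * h)) with (2 * (sqrt th * sqrt th) * h) in A2 by ring.
  rewrite Hss in A2.
  split; nra.
Qed.

Lemma Phi_bound : exists B, forall y, 0 <= y -> MC.Phi y <= B.
Proof.
  destruct (MC.Phi_lim 1 Rlt_0_1) as [M HM].
  exists (Rmax M (sqrt PI / 2 + 1)). intros y Hy.
  destruct (Rle_or_lt M y) as [H|H].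
  - specialize (HM y H). apply Rabs_def2 in HM.
    apply Rle_trans with (sqrt PI / 2 + 1); [lra | apply Rmax_r].
  - apply Rle_trans with M; [| apply Rmax_l].
    assert (X := MC.Phi_le y Hy). lra.
Qed.

Lemma FF_bound th : 0 < th -> exists K, forall t, 0 < t -> FF th t <= K.
Proof.
  intros Hth. destruct Phi_bound as [B HB].
  assert (Hs := sqrt_lt_R0 th Hth).
  exists (2 * sqrt th * B). intros t Ht. unfold FF.
  assert (X := HB (sqrt th * t) ltac:(nra)).
  assert (Eq : (1 - exp (- (th * (t * t)))) / t = t * gg th t).
  { unfold gg. field. lra. }
  rewrite Eq. destruct (gg_bounds th t Hth Ht) as [G1 G2].
  assert (2 * sqrt th * MC.Phi (sqrt th * t) <= 2 * sqrt th * B).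
  { apply Rmult_le_compat_l; lra. }
  nra.
Qed.

Lemma FF_lim th : 0 < th -> forall eps, 0 < eps ->
  exists T, 0 < T /\ forall t, T <= t -> Rabs (FF th t - sqrt (PI * th)) < eps.
Proof.
  intros Hth eps Heps. assert (HPI := PI_RGT_0).
  assert (Hs := sqrt_lt_R0 th Hth).
  assert (Hss := sqrt_sqrt th (Rlt_le _ _ Hth)).
  destruct (MC.Phi_lim (eps / (4 * sqrt th))) as [M HM].
  { apply Rdiv_lt_0_compat; lra. }
  set (T := Rmax 1 (Rmax (M / sqrt th) (2 / eps))).
  assert (T1 : 1 <= T) by apply Rmax_l.
  assert (T2 : M / sqrt th <= T) by (eapply Rle_trans; [apply Rmax_l | apply Rmax_r]).
  assert (T3 : 2 / eps <= T) by (eapply Rle_trans; [apply Rmax_r | apply Rmax_r]).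
  exists T. split; [lra|]. intros t Ht.
  assert (Ht0 : 0 < t) by lra.
  assert (HMt : M <= sqrt th * t).
  { apply Rle_trans with (sqrt th * (M / sqrt th)).
    - right. field. lra.
    - apply Rmult_le_compat_l; lra. }
  specialize (HM _ HMt).
  rewrite sqrt_mult by lra.
  unfold FF.
  assert (Eq : (1 - exp (- (th * (t * t)))) / t = t * gg th t).
  { unfold gg. field. lra. }
  rewrite Eq. destruct (gg_bounds th t Hth Ht0) as [G1 G2].
  assert (Q : t * gg th t <= 1 / t).
  { unfold gg. assert (Ex := exp_pos (- (th * (t * t)))).
    replace (t * ((1 - exp (- (th * (t * t)))) / (t * t)))
      with ((1 - exp (- (th * (t * t)))) / t) by (field; lra).
    unfold Rdiv. apply Rmult_le_compat_r; [left; apply Rinv_0_lt_compat; lra | lra]. }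
  assert (Q2 : 1 / t <= eps / 2).
  { apply Rle_trans with (1 / (2 / eps)).
    - apply Rmult_le_compat_l; [lra|]. apply Rinv_le_contravar; [apply Rdiv_lt_0_compat; lra | lra].
    - right. field. lra. }
  assert (G0 : 0 <= t * gg th t) by nra.
  apply Rabs_def2 in HM. destruct HM as [HM1 HM2].
  assert (Eq2 : 2 * sqrt th * MC.Phi (sqrt th * t) - t * gg th t - sqrt PI * sqrt th
     = 2 * sqrt th * (MC.Phi (sqrt th * t) - sqrt PI / 2) - t * gg th t) by field.
  rewrite Eq2.
  assert (E3 : 2 * sqrt th * (eps / (4 * sqrt th)) = eps / 2) by (field; lra).
  assert (A : Rabs (2 * sqrt th * (MC.Phi (sqrt th * t) - sqrt PI / 2)) < eps / 2).
  { rewrite Rabs_mult, Rabs_right by lra. rewrite <- E3.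
    apply Rmult_lt_compat_l; [lra|]. apply Rabs_def1; lra. }
  apply Rabs_def2 in A. apply Rabs_def1; lra.
Qed.

Lemma lim_FF_seq th h c : 0 < th -> 0 < h -> 0 <= c ->
  is_lim_seq (fun N => FF th ((INR N + c) * h)) (sqrt (PI * th)).
Proof.
  intros Hth Hh Hc. apply is_lim_seq_Reals. intros eps Heps.
  destruct (FF_lim th Hth eps Heps) as [T [HT HT2]].
  destruct (INR_archimed h T Hh) as [N0 HN0].
  exists N0. intros n Hn. unfold R_dist. apply HT2.
  apply le_INR in Hn. nra.
Qed.

Definition aa (th h : R) (j : nat) : R := h * gg th ((INR j + 1) * h).

Lemma aa_sandwich th h : 0 < th -> 0 < h -> forall N,
  FF th ((INR N + 2) * h) - FF th h <= sum_n (aa th h) N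
  <= FF th ((INR N + 1) * h) - FF th h + h * gg th h.
Proof.
  intros Hth Hh N. induction N as [|N IH].
  - rewrite sum_O. unfold aa. simpl INR.
    replace ((0 + 1) * h) with h by ring.
    replace ((0 + 2) * h) with ((1 + 1) * h) by ring.
    destruct (FF_step th h 1 Hth Hh (Rle_refl 1)) as [A B].
    replace (1 * h) with h in B by ring. lra.
  - rewrite sum_Sn.
    change (plus (sum_n (aa th h) N) (aa th h (S N))) with (sum_n (aa th h) N + aa th h (S N)).
    assert (E : aa th h (S N) = h * gg th ((INR N + 2) * h)).
    { unfold aa. rewrite S_INR. do 3 f_equal. ring. }
    rewrite E, S_INR.
    assert (HN := pos_INR N).
    destruct (FF_step th h (INR N + 2) Hth Hh ltac:(lra)) as [A1 B1].
    destruct (FF_step th h (INR N + 1) Hth Hh ltac:(lra)) as [A2 B2].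
    replace (INR N + 1 + 2) with (INR N + 2 + 1) by ring.
    replace (INR N + 1 + 1) with (INR N + 2) by ring.
    replace (INR N + 1 + 1) with (INR N + 2) in A2 by ring.
    lra.
Qed.

Lemma aa_series th h : 0 < th -> 0 < h ->
  ex_series (aa th h) /\ Rabs (Series (aa th h) - sqrt (PI * th)) <= 2 * th * h.
Proof.
  intros Hth Hh.
  destruct (FF_bound th Hth) as [K HK].
  assert (Hpos : forall j, 0 <= aa th h j).
  { intros j. unfold aa. assert (HN := pos_INR j).
    destruct (gg_bounds th ((INR j + 1) * h) Hth ltac:(nra)). nra. }
  assert (Hex : ex_finite_lim_seq (sum_n (aa th h))).
  { apply ex_finite_lim_seq_incr with (M := K - FF th h + h * gg th h).
    - intros n. rewrite sum_Sn.
      change (plus (sum_n (aa th h) n) (aa th h (S n))) with (sum_n (aa th h) n + aa th h (S n)).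
      specialize (Hpos (S n)). lra.
    - intros n. destruct (aa_sandwich th h Hth Hh n) as [_ B].
      assert (HN := pos_INR n).
      specialize (HK ((INR n + 1) * h) ltac:(nra)). lra. }
  destruct Hex as [l Hl].
  assert (Hs : is_series (aa th h) l).
  { apply is_series_Reals. apply is_lim_seq_Reals in Hl.
    intros eps Heps. destruct (Hl eps Heps) as [N HN]. exists N. intros n Hn.
    rewrite <- sum_n_Reals. apply HN; auto. }
  split; [exists l; exact Hs|].
  rewrite (is_series_unique _ _ Hs).
  assert (L1 := lim_FF_seq th h 2 Hth Hh ltac:(lra)).
  assert (L2 := lim_FF_seq th h 1 Hth Hh ltac:(lra)).
  assert (L1' := is_lim_seq_minus' _ _ _ _ L1 (is_lim_seq_const (FF th h))).
  assert (L2' := is_lim_seq_plus' _ _ _ _ (is_lim_seq_minus' _ _ _ _ L2 (is_lim_seq_const (FF th h)))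
           (is_lim_seq_const (h * gg th h))).
  assert (C1 := is_lim_seq_le _ _ _ _ (fun N => proj1 (aa_sandwich th h Hth Hh N)) L1' Hl).
  assert (C2 := is_lim_seq_le _ _ _ _ (fun N => proj2 (aa_sandwich th h Hth Hh N)) Hl L2').
  simpl in C1, C2.
  destruct (FF_small th h Hth Hh). destruct (gg_bounds th h Hth Hh).
  apply Rabs_le. nra.
Qed.

Lemma sum_n_S' (a : nat -> R) N : sum_n a (S N) = sum_n a N + a (S N).
Proof. rewrite sum_Sn. reflexivity. Qed.

Lemma abel_bound (a c : nat -> R) M :
  (forall k, c (S k) <= c k) -> (forall k, 0 <= c k) ->
  (forall N, Rabs (sum_n a N) <= M) ->
  forall N, Rabs (sum_n (fun k => a k * c k) N) <= M * c O.
Proof.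
  intros Hdec Hpos HM.
  assert (Hstr : forall N, Rabs (sum_n (fun k => a k * c k) N - sum_n a N * c N) <= M * (c O - c N)).
  { induction N as [|N IH].
    - rewrite !sum_O. replace (a O * c O - a O * c O) with 0 by ring.
      rewrite Rabs_R0. lra.
    - rewrite !sum_n_S'.
      replace (sum_n (fun k => a k * c k) N + a (S N) * c (S N) - (sum_n a N + a (S N)) * c (S N))
        with ((sum_n (fun k => a k * c k) N - sum_n a N * c N) + sum_n a N * (c N - c (S N))) by ring.
      eapply Rle_trans; [apply Rabs_triang|].
      rewrite Rabs_mult, (Rabs_right (c N - c (S N))) by (specialize (Hdec N); lra).
      specialize (HM N). specialize (Hdec N).
      assert (Rabs (sum_n a N) * (c N - c (S N)) <= M * (c N - c (S N))) by
        (apply Rmult_le_compat_r; lra).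
      lra. }
  intros N. specialize (Hstr N).
  replace (sum_n (fun k => a k * c k) N) with
    ((sum_n (fun k => a k * c k) N - sum_n a N * c N) + sum_n a N * c N) by ring.
  eapply Rle_trans; [apply Rabs_triang|].
  rewrite Rabs_mult, (Rabs_right (c N)) by (specialize (Hpos N); lra).
  assert (Rabs (sum_n a N) * c N <= M * c N) by
    (apply Rmult_le_compat_r; [apply Hpos | apply HM]).
  lra.
Qed.

Lemma cos_sum x N : 2 * sin x * sum_n (fun j => cos (2 * (INR j + 1) * x)) N
  = sin ((2 * INR N + 3) * x) - sin x.
Proof.
  induction N as [|N IH].
  - rewrite sum_O. simpl INR.
    replace ((2 * 0 + 3) * x) with (2 * x + x) by ring.
    replace (2 * (0 + 1) * x) with (2 * x) by ring.
    rewrite sin_plus. replace (2 * x) with (x + x) by ring.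
    rewrite sin_plus, cos_plus. ring_simplify.
    assert (H := sin2_cos2 x). unfold Rsqr in H. replace (cos x ^ 2) with (1 - sin x ^ 2) by (rewrite <- H; ring). ring.
  - rewrite sum_n_S', Rmult_plus_distr_l, IH, S_INR.
    set (a := 2 * (INR N + 1 + 1) * x).
    replace ((2 * INR N + 3) * x) with (a - x) by (unfold a; ring).
    replace ((2 * (INR N + 1) + 3) * x) with (a + x) by (unfold a; ring).
    rewrite sin_plus, sin_minus. ring.
Qed.

Lemma cos_sum_bound x N : 0 < sin x ->
  Rabs (sum_n (fun j => cos (2 * (INR j + 1) * x)) N) <= / sin x.
Proof.
  intros Hs. assert (E := cos_sum x N).
  assert (B1 := SIN_bound ((2 * INR N + 3) * x)).
  assert (B2 := SIN_bound x).
  set (S0 := sum_n (fun j => cos (2 * (INR j + 1) * x)) N) in *.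
  assert (Hb : Rabs (2 * sin x * S0) <= 2).
  { rewrite E. apply Rabs_le. lra. }
  rewrite Rabs_mult, (Rabs_right (2 * sin x)) in Hb by lra.
  apply (Rmult_le_reg_l (2 * sin x)); [lra|].
  replace (2 * sin x * / sin x) with 2 by (field; lra). exact Hb.
Qed.

Lemma ex_series_Rmult (k : R) (a : nat -> R) : ex_series a -> ex_series (fun j => k * a j).
Proof. intros H. exact (ex_series_scal_l k a H). Qed.

Lemma per_n x th n : 0 < sin x -> 0 < th -> (1 <= n)%nat ->
  ex_series (termA4 x th n) /\
  Rabs (sqrt (INR n) * Series (termA4 x th n) - sqrt (PI * th) / 2)
    <= th * (1 + / sin x / 2) * / sqrt (INR n).
Proof.
  intros Hsx Hth Hn.
  assert (HnR : 0 < INR n) by (apply lt_0_INR; lia).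
  assert (Hsq := sqrt_lt_R0 _ HnR).
  assert (Hsq2 := sqrt_sqrt _ (Rlt_le _ _ HnR)).
  set (h := / sqrt (INR n)).
  assert (Hh : 0 < h) by (apply Rinv_0_lt_compat; lra).
  assert (Hhh : h * h = / INR n).
  { unfold h. rewrite <- Rinv_mult. now rewrite Hsq2. }
  assert (Hsh : sqrt (INR n) = / h) by (unfold h; rewrite Rinv_inv; reflexivity).
  set (c := fun j => h * aa th h j).
  set (cb := fun j => cos (2 * (INR j + 1) * x) * c j).
  assert (Ec : forall j, c j = (1 - exp (- th * (INR (S j)) ^ 2 / INR n)) / (INR (S j)) ^ 2).
  { intros j. unfold c, aa, gg. rewrite S_INR.
    assert (Hk : 0 < INR j + 1) by (assert (X := pos_INR j); lra).
    set (k := INR j + 1) in *.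
    replace (- th * k ^ 2 / INR n) with (- (th * (k * h * (k * h)))).
    - field. split; lra.
    - replace (k * h * (k * h)) with (k ^ 2 * (h * h)) by ring. rewrite Hhh. field. lra. }
  assert (Et : forall j, termA4 x th n j = / 2 * c j - / 2 * cb j).
  { intros j. unfold termA4, cb. cbv zeta. rewrite Ec. rewrite <- S_INR.
    assert (Hk : 0 < INR (S j)) by (apply lt_0_INR; lia).
    set (k := INR (S j)) in *.
    replace (2 * k * x) with (2 * (k * x)) by ring.
    rewrite cos_2a_sin. simpl pow. field. lra. }
  destruct (aa_series th h Hth Hh) as [Hexa Ha].
  assert (Hexc : ex_series c) by (exact (ex_series_Rmult h _ Hexa)).
  assert (Hcpos : forall j, 0 <= c j).
  { intros j. unfold c, aa. assert (X := pos_INR j).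
    destruct (gg_bounds th ((INR j + 1) * h) Hth ltac:(nra)). nra. }
  assert (Hcdec : forall j, c (S j) <= c j).
  { intros j. unfold c, aa. rewrite S_INR. assert (X := pos_INR j).
    assert (gg th ((INR j + 1 + 1) * h) <= gg th ((INR j + 1) * h)).
    { apply gg_dec; nra. }
    apply Rmult_le_compat_l; [lra|]. apply Rmult_le_compat_l; lra. }
  assert (Hexcb : ex_series cb).
  { refine (@ex_series_le R_AbsRing R_CompleteNormedModule cb c _ Hexc).
    intros j. unfold cb, norm; simpl. unfold abs; simpl.
    rewrite Rabs_mult, (Rabs_right (c j)) by (specialize (Hcpos j); lra).
    assert (X := COS_bound (2 * (INR j + 1) * x)).
    assert (Rabs (cos (2 * (INR j + 1) * x)) <= 1) by (apply Rabs_le; lra).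
    specialize (Hcpos j). nra. }
  assert (Hext : ex_series (fun j => / 2 * c j - / 2 * cb j)).
  { apply (ex_series_minus (fun j => / 2 * c j) (fun j => / 2 * cb j));
      apply ex_series_Rmult; assumption. }
  split.
  { apply ex_series_ext with (fun j => / 2 * c j - / 2 * cb j); [intros; now rewrite Et|exact Hext]. }
  rewrite (Series_ext _ _ Et).
  rewrite (Series_minus (fun j => / 2 * c j) (fun j => / 2 * cb j))
    by (apply ex_series_Rmult; assumption).
  rewrite !Series_scal_l.
  assert (Ec2 : Series c = h * Series (aa th h)) by apply Series_scal_l.
  rewrite Ec2.
  assert (Hcb : Rabs (Series cb) <= / sin x * (h * h * th)).
  { assert (Hab := abel_bound (fun j => cos (2 * (INR j + 1) * x)) c (/ sin x) Hcdec Hcpos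
                  (fun N => cos_sum_bound x N Hsx)).
    assert (L : is_lim_seq (sum_n cb) (Series cb)) by (apply Series_correct; exact Hexcb).
    assert (L2 := is_lim_seq_abs _ _ L).
    assert (C := is_lim_seq_le _ _ _ _ (fun N => Hab N) L2 (is_lim_seq_const _)).
    simpl in C.
    assert (Hc0 : c O <= h * h * th).
    { unfold c, aa. simpl INR. replace ((0 + 1) * h) with h by ring.
      destruct (gg_bounds th h Hth Hh). nra. }
    assert (0 < / sin x) by (apply Rinv_0_lt_compat; lra).
    eapply Rle_trans; [exact C|]. apply Rmult_le_compat_l; lra. }
  rewrite Hsh.
  replace (/ h * (/ 2 * (h * Series (aa th h)) - / 2 * Series cb) - sqrt (PI * th) / 2)
    with (/ 2 * (Series (aa th h) - sqrt (PI * th)) - / 2 * (Series cb / h)) by (field; lra).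
  eapply Rle_trans; [apply Rabs_triang|]. rewrite Rabs_Ropp, !Rabs_mult.
  rewrite (Rabs_right (/ 2)) by lra.
  unfold Rdiv. rewrite Rabs_mult, (Rabs_right (/ h)) by (left; apply Rinv_0_lt_compat; lra).
  fold h.
  assert (0 < / sin x) by (apply Rinv_0_lt_compat; lra).
  assert (A1 : / 2 * Rabs (Series (aa th h) - sqrt (PI * th)) <= th * h) by lra.
  assert (A2 : Rabs (Series cb) * / h <= / sin x * (h * th)).
  { apply Rle_trans with (/ sin x * (h * h * th) * / h).
    - apply Rmult_le_compat_r; [left; apply Rinv_0_lt_compat; lra | exact Hcb].
    - right. field. lra. }
  nra.
Qed.

Theorem lemmaA4 (x theta : R) (hx : 0 < x < PI) (htheta : 0 < theta) :
  (forall n : nat, (1 <= n)%nat -> ex_series (termA4 x theta n)) /\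
  is_lim_seq (fun n : nat => sqrt (INR n) * Series (termA4 x theta n))
             (sqrt (PI * theta) / 2).
Proof.
  assert (Hsx : 0 < sin x) by (apply sin_gt_0; lra).
  split.
  - intros n Hn. exact (proj1 (per_n x theta n Hsx htheta Hn)).
  - apply is_lim_seq_Reals. intros eps Heps.
    set (K := theta * (1 + / sin x / 2)).
    assert (HK : 0 < K).
    { unfold K. assert (0 < / sin x) by (apply Rinv_0_lt_compat; lra).
      apply Rmult_lt_0_compat; lra. }
    destruct (INR_unbounded ((K / eps) ^ 2)) as [N0 HN0].
    exists (S N0). intros n Hn.
    assert (Hn1 : (1 <= n)%nat) by lia.
    destruct (per_n x theta n Hsx htheta Hn1) as [_ B].
    fold K in B. unfold R_dist.
    assert (HnR : INR N0 <= INR n) by (apply le_INR; lia).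
    assert (HnP : 0 < INR n) by (apply lt_0_INR; lia).
    assert (Hsq : K / eps < sqrt (INR n)).
    { rewrite <- (sqrt_pow2 (K / eps)) by (left; apply Rdiv_lt_0_compat; lra).
      apply sqrt_lt_1; [apply pow_le; left; apply Rdiv_lt_0_compat; lra | lra | lra]. }
    assert (Hs0 : 0 < sqrt (INR n)) by (apply sqrt_lt_R0; lra).
    eapply Rle_lt_trans; [exact B|].
    apply (Rmult_lt_reg_r (sqrt (INR n))); [lra|].
    rewrite Rmult_assoc, Rinv_l by lra.
    apply (Rmult_lt_reg_r (/ eps)); [apply Rinv_0_lt_compat; lra|].
    replace (eps * sqrt (INR n) * / eps) with (sqrt (INR n)) by (field; lra).
    replace (K * 1 * / eps) with (K / eps) by (unfold Rdiv; ring). exact Hsq.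
Qed.
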